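(* Let $\Gamma$ be a metrized graph and let $p,q,s\in\Gamma$ with $p\neq q$. Writing $p$ also for the point of $\Gamma_{pq}$ obtained by identifying $p$ and $q$, we have $$r_{\Gamma_{pq}}(p,s)=\frac{r(p,s)\,r(q,s)-j_s(p,q)^2}{r(p,q)}=j_s(p,q)+\frac{j_p(q,s)\,j_q(p,s)}{r(p,q)}=r(p,s)-\frac{j_p(q,s)^2}{r(p,q)}.$$
   Context: A metrized graph $\Gamma$ is a finite connected graph (multiple edges and self-loops allowed) in which each edge is identified with a closed line segment of positive length. $\Gamma$ is regarded as a resistive electric circuit in which each edge is a resistor whose resistance equals its length. $r(x,y)$ is the effective resistance between $x$ and $y$; $j_z(x,y)$ is the voltage at $x$ when a unit current enters at $y$ and exits at $z$, with reference voltage $0$ at $z$. $\Gamma_{pq}$ is the metrized graph obtained from $\Gamma$ by identifying $p$ and $q$, and $r_{\Gamma_{pq}}$ is its resistance function. *)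

(* Defs.v *)
From HB Require Import structures.
From mathcomp Require Import all_boot all_order all_algebra.
From Stdlib Require Import ClassicalEpsilon.
Set Implicit Arguments. Unset Strict Implicit. Unset Printing Implicit Defensive.
Import Order.TTheory GRing.Theory Num.Theory.
Local Open Scope ring_scope.

(* A metrized graph is given by a model: a finite vertex type V, a finite
   edge type E (multiple edges and self-loops allowed), endpoint maps
   src tgt : E -> V, and edge lengths len : E -> R (= resistances). *)

Section MetrizedGraph.
Variables (R : realFieldType) (V E : finType) (src tgt : E -> V) (len : E -> R).

Definition adj : rel V := fun u v =>
  [exists e : E, ((src e == u) && (tgt e == v)) || ((src e == v) && (tgt e == u))].

Definition connected_graph : Prop := forall u v : V, connect adj u v.

Definition positive_lengths : Prop := forall e : E, 0 < len e.

Definition current_out (f : V -> R) (v : V) : R :=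
  \sum_(e : E | src e == v) (f v - f (tgt e)) / len e +
  \sum_(e : E | tgt e == v) (f v - f (src e)) / len e.

(* f is the voltage when a unit current enters at y and exits at z,
   with reference voltage 0 at z (Kirchhoff's current law at every vertex) *)
Definition is_voltage (z y : V) (f : V -> R) : Prop :=
  f z = 0 /\ forall v : V, current_out f v = (v == y)%:R - (v == z)%:R.

Definition jfun (z x y : V) : R :=
  epsilon (inhabits (fun _ : V => 0 : R)) (is_voltage z y) x.

Definition resistance (x y : V) : R := jfun y x x.

End MetrizedGraph.

(* The graph Gamma_pq obtained by identifying p and q: vertex type
   {v : V | v != q}, every vertex q being sent to p. *)
Section Identify.
Variables (V : finType) (p q : V) (hpq : p != q).

Definition ident_vertex (v : V) : {v : V | v != q} :=
  insubd (exist (fun w : V => w != q) p hpq) v.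

End Identify.

(* Main.v *)
Require Import Defs.
From mathcomp Require Import all_boot all_order all_algebra.
From mathcomp Require Import ring.
From Stdlib Require Import ClassicalEpsilon.
Set Implicit Arguments. Unset Strict Implicit. Unset Printing Implicit Defensive.
Import Order.TTheory GRing.Theory Num.Theory.
Local Open Scope ring_scope.

Section Gen.
Variables (R : realFieldType) (V E : finType) (src tgt : E -> V) (len : E -> R).
Hypothesis conn : connected_graph src tgt.
Hypothesis pos : positive_lengths len.

Local Notation co := (current_out src tgt len).

Lemma sum_fiberP (h : E -> V) (H : V -> E -> R) (P : pred V) :
  \sum_(v | P v) \sum_(e | h e == v) H v e = \sum_(e | P (h e)) H (h e) e.
Proof.
under eq_bigr do rewrite big_mkcond.
rewrite exchange_big /= [RHS]big_mkcond /=; apply: eq_bigr => e _.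
rewrite big_mkcond (bigD1 (h e)) //= eqxx big1 ?addr0 //.
by move=> v hv; rewrite eq_sym (negbTE hv); case: (P v).
Qed.

Lemma sum_fiber (h : E -> V) (H : V -> E -> R) :
  \sum_v \sum_(e | h e == v) H v e = \sum_e H (h e) e.
Proof. exact: (sum_fiberP h H predT). Qed.

Lemma co_bilin f g : \sum_v g v * co f v =
  \sum_e (f (src e) - f (tgt e)) * (g (src e) - g (tgt e)) / len e.
Proof.
rewrite /current_out.
under eq_bigr do rewrite mulrDr !mulr_sumr.
rewrite big_split /=.
rewrite (sum_fiber src (fun v e => g v * ((f v - f (tgt e)) / len e))).
rewrite (sum_fiber tgt (fun v e => g v * ((f v - f (src e)) / len e))).
rewrite -big_split; apply: eq_bigr => e _ /=; ring.
Qed.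

Lemma co_lin2 a b c f g v :
  co (fun w => a * f w + b * g w + c) v = a * co f v + b * co g v.
Proof.
have K : forall (P : pred E) (h : E -> V),
  \sum_(e | P e) (a * f v + b * g v + c - (a * f (h e) + b * g (h e) + c)) / len e
  = a * \sum_(e | P e) (f v - f (h e)) / len e + b * \sum_(e | P e) (g v - g (h e)) / len e.
  move=> P h; rewrite !mulr_sumr -big_split; apply: eq_bigr => e _ /=; ring.
rewrite /current_out !K; ring.
Qed.

Lemma co_ext f g v : (forall w, f w = g w) -> co f v = co g v.
Proof.
move=> H; rewrite /current_out; congr (_ + _); apply: eq_bigr => e _; by rewrite !H.
Qed.

Lemma co_lin a f g v : co (fun w => a * f w + g w) v = a * co f v + co g v.
Proof.
rewrite (@co_ext _ (fun w => a * f w + 1 * g w + 0)).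
  by rewrite (co_lin2 a 1 0 f g) mul1r.
by move=> w; rewrite mul1r addr0.
Qed.

Lemma co_const c v : co (fun _ => c) v = 0.
Proof.
rewrite (@co_ext _ (fun w => 0 * (fun _ => 0) w + 0 * (fun _ => 0) w + c)).
  by rewrite (co_lin2 0 0 c (fun _ => 0) (fun _ => 0)) !mul0r addr0.
by move=> w; rewrite !mul0r !add0r.
Qed.

Lemma co_sum (I : Type) (s : seq I) (c : I -> R) (F : I -> V -> R) v :
  co (fun w => \sum_(i <- s) c i * F i w) v = \sum_(i <- s) c i * co (F i) v.
Proof.
elim: s => [|i s IH].
  by rewrite big_nil (@co_ext _ (fun _ => 0)) ?co_const // => w; rewrite big_nil.
rewrite big_cons (@co_ext _ (fun w => c i * F i w + \sum_(j <- s) c j * F j w)).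
  by rewrite co_lin IH.
by move=> w; rewrite big_cons.
Qed.

Lemma sum_ind (P : pred V) u : \sum_(v | P v) ((v == u)%:R : R) = (P u)%:R.
Proof.
rewrite big_mkcond (bigD1 u) //= eqxx big1 ?addr0.
  by case: (P u).
by move=> v hv; rewrite (negbTE hv); case: (P v).
Qed.

Lemma sum_mul_ind (g : V -> R) y z :
  \sum_v g v * ((v == y)%:R - (v == z)%:R) = g y - g z.
Proof.
rewrite (eq_bigr (fun v => g v * (v == y)%:R - g v * (v == z)%:R)); last by move=> v _; rewrite mulrBr.
rewrite sumrB; congr (_ - _).
  rewrite (bigD1 y) //= eqxx mulr1 big1 ?addr0 // => v hv; by rewrite (negbTE hv) mulr0.
rewrite (bigD1 z) //= eqxx mulr1 big1 ?addr0 // => v hv; by rewrite (negbTE hv) mulr0.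
Qed.

Lemma co_sum0 f : \sum_v co f v = 0.
Proof.
rewrite (eq_bigr (fun v => (fun _ => 1) v * co f v)); last by move=> v _; rewrite mul1r.
by rewrite co_bilin big1 // => e _; rewrite subrr mulr0 mul0r.
Qed.

Lemma edge_zero (f : V -> R) : \sum_e (f (src e) - f (tgt e)) * (f (src e) - f (tgt e)) / len e = 0 ->
  forall e, f (src e) = f (tgt e).
Proof.
move=> E0 e.
have Hnn : forall i : E, true -> 0 <= (f (src i) - f (tgt i)) * (f (src i) - f (tgt i)) / len i.
  move=> i _; apply: mulr_ge0; first by rewrite -expr2 sqr_ge0.
  by rewrite invr_ge0 ltW // pos.
have := @psumr_eq0P _ _ _ _ Hnn E0 e isT.
have Hl : len e != 0 by rewrite gt_eqF // pos.
move=> /eqP; rewrite mulf_eq0 invr_eq0 (negbTE Hl) orbF mulf_eq0 orbb subr_eq0.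
by move/eqP.
Qed.

Lemma edge_const (f : V -> R) : (forall e, f (src e) = f (tgt e)) -> forall u v, f u = f v.
Proof.
move=> Hedge u v.
have Hc : closed (adj src tgt) [pred x | f x == f u].
  move=> x y /existsP [e /orP [/andP [/eqP <- /eqP <-] | /andP [/eqP <- /eqP <-]]];
  by rewrite !inE Hedge.
have := closed_connect Hc (conn u v).
by rewrite !inE eqxx => /esym/eqP.
Qed.

Lemma co_zero_const f : (forall v, co f v = 0) -> forall u v, f u = f v.
Proof.
move=> H0; apply: edge_const; apply: edge_zero.
by rewrite -co_bilin big1 // => v _; rewrite H0 mulr0.
Qed.

Definition Phi z (f : V -> R) v := if v == z then f z else co f v.

Lemma Phi_sum z (I : Type) (s : seq I) (c : I -> R) (F : I -> V -> R) v :
  Phi z (fun w => \sum_(i <- s) c i * F i w) v = \sum_(i <- s) c i * Phi z (F i) v.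
Proof. rewrite /Phi; case: ifP => _ //; exact: co_sum. Qed.

Lemma volt_exists z y : exists f, is_voltage src tgt len z y f.
Proof.
pose n := #|V|.
pose A : 'M[R]_n := \matrix_(i, j) Phi z (fun w => (w == enum_val i)%:R) (enum_val j).
have key : forall x : 'rV[R]_n, forall j,
    (x *m A) 0 j = Phi z (fun w => x 0 (enum_rank w)) (enum_val j).
  move=> x j; rewrite mxE.
  have -> : Phi z (fun w => x 0 (enum_rank w)) (enum_val j) =
            Phi z (fun w => \sum_i x 0 i * (w == enum_val i)%:R) (enum_val j).
    rewrite /Phi; have HH : forall w, x 0 (enum_rank w) = \sum_i x 0 i * (w == enum_val i)%:R.
      move=> w; rewrite (bigD1 (enum_rank w)) //= enum_rankK eqxx mulr1 big1 ?addr0 //.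
      move=> i hi; case: eqP => [hw|]; last by rewrite mulr0.
      by rewrite hw enum_valK eqxx in hi.
    case: ifP => _; first exact: HH.
    exact: co_ext.
  rewrite Phi_sum; apply: eq_bigr => i _; by rewrite mxE.
have inj : forall x : 'rV[R]_n, x *m A = 0 -> x = 0.
  move=> x hx; pose f := fun w => x 0 (enum_rank w).
  have hP : forall v, Phi z f v = 0.
    by move=> v; rewrite -(enum_rankK v) -key hx mxE.
  have hz : f z = 0 by have := hP z; rewrite /Phi eqxx.
  have hco : forall v, co f v = 0.
    have hne : forall v, v != z -> co f v = 0.
      by move=> v hv; have := hP v; rewrite /Phi (negbTE hv).
    move=> v; case: (eqVneq v z) => [->|hv]; last exact: hne.
    have := co_sum0 f; rewrite (bigD1 z) //= big1 ?addr0 //.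
  have hc := co_zero_const hco.
  apply/rowP => i; rewrite mxE.
  by rewrite -(enum_valK i) -/(f (enum_val i)) (hc _ z) hz.
have rf : row_free A.
  rewrite -kermx_eq0; apply/eqP/row_matrixP => i; rewrite row0; apply: inj.
  apply/sub_kermxP; exact: row_sub.
have U : A \in unitmx by rewrite -row_free_unit.
pose b : 'rV[R]_n := \row_j (if enum_val j == z then 0 else (enum_val j == y)%:R).
pose x := b *m invmx A.
have hx : x *m A = b by rewrite /x mulmxKV.
pose f := fun w => x 0 (enum_rank w).
have hP : forall v, Phi z f v = if v == z then 0 else (v == y)%:R.
  by move=> v; rewrite -{1}(enum_rankK v) -key hx mxE enum_rankK.
exists f; split.
  by have := hP z; rewrite /Phi eqxx.
have hne : forall v, v != z -> co f v = (v == y)%:R.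
  by move=> v hv; have := hP v; rewrite /Phi (negbTE hv).
move=> v; case: (eqVneq v z) => [->|hv]; last by rewrite hne // subr0.
have := co_sum0 f; rewrite (bigD1 z) //=.
rewrite (eq_bigr (fun v => (v == y)%:R)); last by move=> w /hne.
rewrite sum_ind => /eqP; rewrite addr_eq0 => /eqP ->.
rewrite [z == y]eq_sym; case: (y == z) => /=; first by rewrite subrr oppr0.
by rewrite sub0r.
Qed.

Lemma volt_spec z y : is_voltage src tgt len z y (fun x => jfun src tgt len z x y).
Proof.
exact: (epsilon_spec (inhabits (fun _ : V => 0 : R)) (is_voltage src tgt len z y) (volt_exists z y)).
Qed.

Lemma volt_uniq z y f : is_voltage src tgt len z y f -> forall x, jfun src tgt len z x y = f x.
Proof.
move=> [hfz hfc]; have [hgz hgc] := volt_spec z y.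
pose h := fun w => (-1) * f w + jfun src tgt len z w y.
have hco : forall v, co h v = 0.
  by move=> v; rewrite co_lin hfc hgc; ring.
have := co_zero_const hco => hc x.
have := hc x z; rewrite /h hfz hgz mulr0 addr0 => H.
apply/eqP; rewrite -subr_eq0; apply/eqP; rewrite -H; ring.
Qed.

Local Notation j := (jfun src tgt len).

Lemma vz z y : j z z y = 0.
Proof. by have [h _] := volt_spec z y. Qed.

Lemma vc z y v : co (fun x => j z x y) v = (v == y)%:R - (v == z)%:R.
Proof. by have [_ h] := volt_spec z y. Qed.

Lemma recip s p q : j s p q = j s q p.
Proof.
have e1 := co_bilin (fun x => j s x q) (fun x => j s x p).
have e2 := co_bilin (fun x => j s x p) (fun x => j s x q).
rewrite (eq_bigr (fun v => j s v p * ((v == q)%:R - (v == s)%:R))) in e1; last by move=> v _; rewrite vc.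
rewrite (eq_bigr (fun v => j s v q * ((v == p)%:R - (v == s)%:R))) in e2; last by move=> v _; rewrite vc.
rewrite sum_mul_ind vz subr0 in e1.
rewrite sum_mul_ind vz subr0 in e2.
rewrite e1 e2; apply: eq_bigr => e _; ring.
Qed.

Lemma r_neq0 p q : p != q -> j q p p != 0.
Proof.
move=> hpq; apply/eqP => H0.
have E0 : \sum_e (j q (src e) p - j q (tgt e) p) * (j q (src e) p - j q (tgt e) p) / len e = 0.
  rewrite -(co_bilin (fun x => j q x p) (fun x => j q x p)).
  rewrite (eq_bigr (fun v => j q v p * ((v == p)%:R - (v == q)%:R))); last by move=> v _; rewrite vc.
  by rewrite sum_mul_ind vz H0 subr0.
have hc := edge_const (edge_zero E0).
have := vc q p p.
rewrite (@co_ext _ (fun _ => j q p p)) ?co_const; last by move=> w; exact: hc.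
rewrite eqxx (negbTE hpq) => /eqP; rewrite eq_sym subr0 oner_eq0 //.
Qed.
End Gen.



Lemma ident_conn (V E : finType) (src tgt : E -> V) (p q : V) (hpq : p != q) :
  connected_graph src tgt ->
  connected_graph (fun e => ident_vertex hpq (src e)) (fun e => ident_vertex hpq (tgt e)).
Proof.
move=> C.
have H : forall x y, connect (adj src tgt) x y ->
    connect (adj (fun e => ident_vertex hpq (src e)) (fun e => ident_vertex hpq (tgt e)))
      (ident_vertex hpq x) (ident_vertex hpq y).
  move=> x y /connectP [pth]; elim: pth x => [|w pth IH] x /=.
    by move=> _ ->; exact: connect0.
  move=> /andP [hxw hp] hy; apply: connect_trans (IH w hp hy); apply: connect1.
  move: hxw => /existsP [e he]; apply/existsP; exists e.
  by move: he => /orP [/andP [/eqP -> /eqP ->] | /andP [/eqP -> /eqP ->]]; rewrite !eqxx ?orbT.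
move=> u v; have := H _ _ (C (val u) (val v)).
by rewrite /ident_vertex !valKd.
Qed.

Lemma ident_co (R : realFieldType) (V E : finType) (src tgt : E -> V) (len : E -> R)
  (p q : V) (hpq : p != q) (F : V -> R) :
  (forall v, F (val (ident_vertex hpq v)) = F v) ->
  forall v', current_out (fun e => ident_vertex hpq (src e)) (fun e => ident_vertex hpq (tgt e))
     len (fun w => F (val w)) v'
   = \sum_(v | ident_vertex hpq v == v') current_out src tgt len F v.
Proof.
move=> HF v'; rewrite /current_out big_split /=.
rewrite (sum_fiberP src (fun v e => (F v - F (tgt e)) / len e) (fun v => ident_vertex hpq v == v')).
rewrite (sum_fiberP tgt (fun v e => (F v - F (src e)) / len e) (fun v => ident_vertex hpq v == v')).
by congr (_ + _); apply: eq_bigr => e /eqP <-; rewrite !HF.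
Qed.

Theorem theorem2p4 (R : realFieldType) (V E : finType)
  (src tgt : E -> V) (len : E -> R) (p q s : V) (hpq : p != q) :
  connected_graph src tgt -> positive_lengths len ->
  let r := resistance src tgt len in
  let j := jfun src tgt len in
  let rpq := resistance (fun e => ident_vertex hpq (src e))
                        (fun e => ident_vertex hpq (tgt e)) len in
  let p' := ident_vertex hpq p in
  let s' := ident_vertex hpq s in
  [/\ rpq p' s' = (r p s * r q s - j s p q ^+ 2) / r p q,
      rpq p' s' = j s p q + j p q s * j q p s / r p q
    & rpq p' s' = r p s - j p q s ^+ 2 / r p q].
Proof.
move=> C P r j rpq p' s'.
have vz := vz C P; have vc := vc C P.
set a := j s p p; set b := j s q q; set c := j s p q.
have rec : j s q p = c by rewrite /c /j (recip C P).
have Hr : j q p p = 1 * j s p p + (-1) * j s p q + (b - j s q p).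
  apply: (volt_uniq C P (f := fun x => 1 * j s x p + (-1) * j s x q + (b - j s q p))); split.
    by rewrite /= /b; ring.
  by move=> v; rewrite co_lin2 !vc; ring.
have Hs : j p q s = (-1) * j s q p + 0 * j s q p + a.
  apply: (volt_uniq C P (f := fun x => (-1) * j s x p + 0 * j s x p + a)); split.
    by rewrite /= /a /j; ring.
  by move=> v; rewrite co_lin2 !vc; ring.
have Ht : j q p s = (-1) * j s p q + 0 * j s p q + b.
  apply: (volt_uniq C P (f := fun x => (-1) * j s x q + 0 * j s x q + b)); split.
    by rewrite /= /b /j; ring.
  by move=> v; rewrite co_lin2 !vc; ring.
have rne : j q p p != 0 by exact: (r_neq0 C P hpq).
rewrite rec -/a -/c in Hr; rewrite rec in Hs; rewrite -/c in Ht.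
set rr := j q p p in Hr rne.
pose alpha := (b - c) / rr; pose beta := (a - c) / rr.
pose F := fun x => alpha * j s x p + beta * j s x q + 0.
have FpFq : F p = F q.
  by rewrite /F -/a -/b -/c rec /alpha /beta; ring.
have FidentE : forall v, F (val (ident_vertex hpq v)) = F v.
  move=> v; rewrite val_insubd; case: ifP => // /negbFE /eqP ->; exact: FpFq.
have iq : ident_vertex hpq q = p'.
  by apply: val_inj; rewrite !val_insubd /= eqxx /= hpq.
have ab1 : alpha + beta = 1.
  rewrite /alpha /beta -mulrDl.
  have -> : b - c + (a - c) = rr by rewrite Hr; ring.
  exact: divff.
have HV : is_voltage (fun e => ident_vertex hpq (src e)) (fun e => ident_vertex hpq (tgt e))
            len s' p' (fun w => F (val w)).
  split.
    by rewrite /s' FidentE /F /j !vz; ring.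
  move=> v'; rewrite ident_co //.
  rewrite (eq_bigr (fun v => alpha * ((v == p)%:R - (v == s)%:R) + beta * ((v == q)%:R - (v == s)%:R)));
    last by move=> v _; rewrite /F co_lin2 !vc.
  rewrite big_split /= -!mulr_sumr !sumrB !sum_ind iq -/p' -/s'.
  by rewrite -mulrDl ab1 mul1r ![_ == v']eq_sym.
have Hrpq : rpq p' s' = alpha * a + beta * c.
  rewrite /rpq /resistance (volt_uniq (ident_conn hpq C) P HV) /p' FidentE /F /a /c /j; ring.
rewrite Hrpq /r /resistance -/j -/a -/b -/c -/rr Hs Ht -/rr.
have rne2 : a + -1 * c + (b - c) != 0 by move: rne; rewrite Hr mul1r.
rewrite /alpha /beta Hr; split; field; exact: rne2.
Qed.
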